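(* Let $n\ge2$ and $x\in\{0,\dots,n-1\}$ with $x\ge\frac{n+1}{2}$. Then $g_n(x)=1$; equivalently, with $k=n+1+x$, $V_n(k)\ge N(k,n)$.
   Context: Let $\mathcal X=\{A,B,C,D\}$ and let $(X_i)_{i\ge1}$ be the first-order Markov chain on $\mathcal X$ with $\mathbb P(X_1=x)=1/4$ for all $x$ and transitions: from $A$ to $A$ or $C$ w.p. $1/2$ each; from $B$ to $B$ or $D$ w.p. $1/2$ each; from $C$ and from $D$ to each of $A,B,C,D$ w.p. $1/4$. A nonempty string is admissible if all consecutive transitions have positive probability; $\mathcal A$ is the set of admissible nonempty strings; $K(u):=-\log_2\mathbb P(X_1^m=u)$ for $u=x_1^m\in\mathcal A$. $S_k:=\#\{u\in\mathcal A:K(u)=k\}$, $N(k,\ell):=\#\{u\in\mathcal A$ of length $\ell$ with $K(u)=k\}$, $W_{<n}(k):=\sum_{\ell=1}^{n-1}N(k,\ell)$, $V_n(k):=S_k/2-W_{<n}(k)$. Shortlex source code $C$: order nonempty binary strings by length then lexicographically as $b_1,b_2,\dots$; order $\mathcal A$ as $u_1,u_2,\dots$ by increasing $K$, then increasing length, then lexicographically with $A<B<C<D$; set $C(u_j):=b_j$. Let $K_n:=K(X_1^n)$, $L_n:=|C(X_1^n)|$, $I_n:=\mathbf 1\{L_n=K_n-1\}$, $X:=\#\{i\in\{1,\dots,n-1\}:X_i\in\{C,D\}\}$, and $g_n(x):=\mathbb P(I_n=1\mid X=x)$. *)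

(* Defs.v *)
From HB Require Import structures.
From mathcomp Require Import all_boot all_order all_algebra.
Set Implicit Arguments. Unset Strict Implicit. Unset Printing Implicit Defensive.
Import Order.TTheory GRing.Theory Num.Theory.

(* Alphabet X = {A,B,C,D} encoded as 'I_4 with A=0, B=1, C=2, D=3;
   the lexicographic order A<B<C<D is the order on the underlying nats. *)
Notation letter := 'I_4.
Definition LA : letter := @Ordinal 4 0 isT.
Definition LB : letter := @Ordinal 4 1 isT.
Definition LC : letter := @Ordinal 4 2 isT.
Definition LD : letter := @Ordinal 4 3 isT.

Definition trans (a b : letter) : rat :=
  if a == LA then (if (b == LA) || (b == LC) then (1/2)%R else 0%R)
  else if a == LB then (if (b == LB) || (b == LD) then (1/2)%R else 0%R)
  else (1/4)%R.

Definition adm (a b : letter) : bool := trans a b != 0%R.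

Definition admissible (u : seq letter) : bool :=
  if u is a :: s then path adm a s else false.

Definition Pr (u : seq letter) : rat :=
  if u is [::] then 0%R
  else ((1/4) * \prod_(p <- zip u (behead u)) trans p.1 p.2)%R.

(* -log2 of a transition probability of positive probability:
   -log2 (1/2) = 1 (from A or B), -log2 (1/4) = 2 (from C or D). *)
Definition tbits (a b : letter) : nat := if (a == LA) || (a == LB) then 1 else 2.

(* K(u) = -log2 P(X_1^m = u) = -log2(1/4) + sum of -log2 of transitions
   (for admissible u; see lemma Pr_K below). *)
Definition K (u : seq letter) : nat :=
  2 + \sum_(p <- zip u (behead u)) tbits p.1 p.2.

Fixpoint lexlt (s t : seq nat) : bool :=
  match s, t with
  | [::], [::] => false
  | [::], _ :: _ => true
  | _ :: _, [::] => false
  | a :: s', b :: t' => (a < b) || ((a == b) && lexlt s' t')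
  end.

Definition alt (v u : seq letter) : bool :=
  (K v < K u) ||
  ((K v == K u) &&
   ((size v < size u) ||
    ((size v == size u) && lexlt (map val v) (map val u)))).

(* index j of u in the enumeration u_1, u_2, ... of admissible strings
   (every v preceding u has K v <= K u, hence length < K u) *)
Definition arank (u : seq letter) : nat :=
  1 + \sum_(l < K u) #|[pred v : l.-tuple letter | admissible v && alt v u]|.

Definition bslt (t s : seq bool) : bool :=
  (size t < size s) ||
  ((size t == size s) && lexlt (map nat_of_bool t) (map nat_of_bool s)).

(* index j of a nonempty binary string s in the shortlex enumeration
   b_1, b_2, ... of nonempty binary strings, i.e. b_j = s iff brank s = j *)
Definition brank (s : seq bool) : nat :=
  1 + \sum_(l < (size s).+1) #|[pred t : l.-tuple bool | (0 < l) && bslt t s]|.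

(* I = 1{ |C(u)| = K(u) - 1 }, where C(u_j) = b_j : the codeword
   b_{arank u} has length K(u) - 1 *)
Definition Ind (u : seq letter) : bool :=
  [exists t : ((K u).-1).-tuple bool, (0 < (K u).-1) && (brank t == arank u)].

Definition isCD (a : letter) : bool := (a == LC) || (a == LD).
Definition Xcnt (n : nat) (u : seq letter) : nat := count isCD (take n.-1 u).

(* g_n(x) = P(I_n = 1 | X = x), computed over the law of X_1^n *)
Definition g (n x : nat) : rat :=
  ((\sum_(u : n.-tuple letter | (Xcnt n u == x) && Ind u) Pr u) /
   (\sum_(u : n.-tuple letter | Xcnt n u == x) Pr u))%R.

Definition Ncnt (k l : nat) : nat :=
  #|[pred u : l.-tuple letter | admissible u && (K u == k)]|.

(* S_k = #{u admissible, K(u) = k}; since K(u) >= |u| + 1 only lengths < k occur *)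
Definition Scnt (k : nat) : nat := \sum_(l < k) Ncnt k l.

Definition Wlt (n k : nat) : nat := \sum_(1 <= l < n) Ncnt k l.

Definition V (n k : nat) : rat := ((Scnt k)%:R / 2 - (Wlt n k)%:R)%R.

Local Open Scope ring_scope.
Lemma trans_bits a b : adm a b -> trans a b = (2%:R ^+ tbits a b)^-1 :> rat.
Proof.
rewrite /adm /trans /tbits.
by case: a => [[|[|[|[|]]]] ?] //=; case: b => [[|[|[|[|]]]] ?] //=.
Qed.

Lemma Pr_K u : admissible u -> Pr u = (2%:R ^+ K u)^-1.
Proof.
case: u => [|a s] //= H.
rewrite /K /= exprD expr2 !invfM.
suff -> : \prod_(p <- zip (a :: s) s) trans p.1 p.2 =
          (2%:R ^+ \sum_(p <- zip (a :: s) s) tbits p.1 p.2)^-1.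
  by rewrite mulrA; congr (_ * _); rewrite -invfM.
elim: s a H => [|b s IH] a /=; first by rewrite !big_nil invr1.
move=> /andP[Hab Hp]; rewrite !big_cons /= IH // trans_bits // exprD invfM.
done.
Qed.

(* Main.v *)
Require Import Defs.
From mathcomp Require Import all_boot all_order all_algebra.
From Stdlib Require Import Lia.
From mathcomp Require Import zify ring lra.
Set Implicit Arguments. Unset Strict Implicit. Unset Printing Implicit Defensive.

Definition tb (a : letter) : nat := if (a == LA) || (a == LB) then 1 else 2.

Lemma K_cons a b s : K (a :: b :: s) = tb a + K (b :: s).
Proof. by rewrite /K /= big_cons /= /tbits /tb addnCA. Qed.

Lemma adm_cons a b s : admissible (a :: b :: s) = adm a b && admissible (b :: s).
Proof. by []. Qed.

Lemma K_ge2 u : 2 <= K u.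
Proof. by rewrite /K leq_addr. Qed.

Lemma tb_isCD a : tb a = 1 + isCD a.
Proof. by rewrite /tb /isCD; case: a => [[|[|[|[|]]]] ?]. Qed.

Lemma K_count a s : K (a :: s) = (size s).+2 + count isCD (take (size s) (a :: s)).
Proof.
elim: s a => [|b s IH] a; first by rewrite /K /= big_nil.
rewrite K_cons IH /= tb_isCD; lia.
Qed.

Lemma K_size u : admissible u -> (size u).+1 <= K u.
Proof. case: u => [|a s] // _; rewrite K_count /=; lia. Qed.

Lemma sum_tupleS (T : finType) l (F : seq T -> nat) :
  \sum_(u : l.+1.-tuple T) F u = \sum_(a : T) \sum_(w : l.-tuple T) F (a :: w).
Proof.
rewrite pair_big /=.
pose h (p : T * l.-tuple T) : l.+1.-tuple T := [tuple of p.1 :: p.2].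
rewrite (reindex h) //=.
exists (fun u : l.+1.-tuple T => (thead u, [tuple of behead u])) => [p _|u _].
  by case: p => a w; rewrite /h theadE; congr pair; apply: val_inj.
by rewrite [u in RHS]tuple_eta; apply: val_inj.
Qed.

Lemma cardS (T : finType) (P : pred T) : #|[pred u : T | P u]| = \sum_(u : T) (P u : nat).
Proof.
rewrite -sum1_card big_mkcond /=; apply: eq_bigr => u _; rewrite inE; by case: (P u).
Qed.

Lemma adm_tab (a b : letter) : adm a b =
  if val a == 0 then (val b == 0) || (val b == 2)
  else if val a == 1 then (val b == 1) || (val b == 3) else true.
Proof.
rewrite /adm /trans.
by case: a => [[|[|[|[|]]]] ?] //=; case: b => [[|[|[|[|]]]] ?] //=.
Qed.

Lemma tb_tab (a : letter) : tb a = if (val a == 0) || (val a == 1) then 1 else 2.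
Proof. by case: a => [[|[|[|[|]]]] ?]. Qed.

Lemma inner b (X : bool) Kw k : 2 <= Kw ->
  \sum_(a : letter) ((adm a b && X) && (tb a + Kw == k) : nat)
  = (X && (Kw == k.-1)) + 2 * (X && (Kw == k.-2)).
Proof.
move=> HK.
rewrite !big_ord_recl big_ord0 /= !adm_tab !tb_tab /=.
have E1 : (1 + Kw == k) = (Kw == k.-1) by case: (k) => [|k0] /=; [lia| rewrite add1n eqSS].
have E2 : (2 + Kw == k) = (Kw == k.-2) by case: (k) => [|[|k0]] /=; [lia|lia| rewrite add2n !eqSS].
rewrite E1 E2.
case: b => [[|[|[|[|]]]] ?] //=; case: X => //=; lia.
Qed.

Lemma Ncnt0 k : Ncnt k 0 = 0.
Proof.
rewrite /Ncnt cardS big1 // => u _; by case: u => [[|]].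
Qed.

Lemma Ncnt_small k l : k <= l -> Ncnt k l = 0.
Proof.
move=> Hkl; rewrite /Ncnt cardS big1 // => u _.
case Ha: (admissible u) => //=.
have := K_size Ha; rewrite size_tuple => H.
by case: eqP => // E; exfalso; lia.
Qed.

Lemma Ncnt1 k : Ncnt k 1 = 4 * (k == 2).
Proof.
rewrite /Ncnt cardS.
transitivity (\sum_(u : 1.-tuple letter) ((k == 2) : nat)).
  apply: eq_bigr => u _; case: u => [[|a [|]]] //= _.
  by rewrite /K /= big_nil eq_sym.
by rewrite sum_nat_const card_tuple card_ord mulnC.
Qed.

Lemma Ncnt_recS k l : Ncnt k l.+2 = Ncnt k.-1 l.+1 + 2 * Ncnt k.-2 l.+1.
Proof.
rewrite /Ncnt !cardS (sum_tupleS _ (fun s => (admissible s && (K s == k) : nat))) exchange_big /= big_distrr -big_split /=.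
apply: eq_bigr => w _.
case: w => [[|b s] Hs] //=.
under eq_bigr => a _ do rewrite K_cons.
by rewrite inner // K_ge2.
Qed.

Lemma Ncnt_rec k l : k != 2 -> Ncnt k l.+1 = Ncnt k.-1 l + 2 * Ncnt k.-2 l.
Proof.
case: l => [|l] Hk; last exact: Ncnt_recS.
by rewrite Ncnt1 !Ncnt0 (negbTE Hk).
Qed.

Lemma Ncnt_closed m j : Ncnt (m + j + 2) m.+1 = 4 * 2 ^ j * 'C(m, j).
Proof.
elim: m j => [|m IH] j.
  rewrite Ncnt1 bin0n; case: j => [|j] //; rewrite muln0.
  by have -> : (0 + j.+1 + 2 == 2) = false by lia.
rewrite Ncnt_rec; last by lia.
have -> : (m.+1 + j + 2).-1 = m + j + 2 by lia.
rewrite IH; case: j => [|j].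
  rewrite Ncnt_small; last by lia.
  by rewrite !bin0 muln0 addn0.
have -> : (m.+1 + j.+1 + 2).-2 = m + j + 2 by lia.
rewrite IH binS expnS; lia.
Qed.

Lemma Scnt_ext j M : j <= M -> \sum_(l < M) Ncnt j l = Scnt j.
Proof.
move=> HjM; rewrite /Scnt -!(big_mkord xpredT) (big_cat_nat (leq0n j) HjM) /=.
rewrite [X in _ + X = _]big1_seq ?addn0 // => l /andP[_]; rewrite mem_index_iota => /andP[H _].
exact: Ncnt_small.
Qed.

Lemma Scnt_rec k : 2 <= k -> Scnt k.+1 = Scnt k + 2 * Scnt k.-1.
Proof.
move=> Hk.
have Hk2 : k.+1 != 2 by rewrite eqSS; apply/eqP; lia.
rewrite /Scnt big_ord_recl Ncnt0 add0n.
rewrite (eq_bigr (fun i : 'I_k => Ncnt k i + 2 * Ncnt k.-1 i)); last first.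
  by move=> i _; rewrite lift0 Ncnt_rec.
rewrite big_split /= -big_distrr /=.
congr (_ + 2 * _).
apply: Scnt_ext; lia.
Qed.

Lemma S2 : Scnt 2 = 4.
Proof. by rewrite /Scnt !big_ord_recl big_ord0 Ncnt0 lift0 Ncnt1. Qed.

Lemma S3 : Scnt 3 = 4.
Proof. by rewrite (Scnt_rec (leqnn 2)) S2 /Scnt big_ord_recl big_ord0 Ncnt0. Qed.

Lemma Spair k : 2 <= k -> Scnt k + Scnt k.+1 = 2 ^ k.+1.
Proof.
elim: k => [|k IH] // Hk.
have [Hk1|Hk1] := leqP k 1.
  have -> : k = 1 by lia.
  by rewrite S2 S3.
rewrite (Scnt_rec (_ : 2 <= k.+1)) //= expnS -IH //.
lia.
Qed.

Lemma Sle k : 2 <= k -> Scnt k <= 2 ^ k.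
Proof.
case: k => [|[|k]] // _; case: k => [|k]; first by rewrite S2.
have := Spair (_ : 2 <= k.+2); lia.
Qed.

Lemma Cid k : 2 <= k -> 2 * \sum_(j < k) Scnt j + Scnt k = 2 ^ k.+1 - 4.
Proof.
elim: k => [|k IH] // Hk.
have [Hk1|Hk1] := leqP k 1.
  have -> : k = 1 by lia.
  by rewrite !big_ord_recl big_ord0 S2 /Scnt !big_ord0 /= big_ord_recl big_ord0 Ncnt0.
rewrite big_ord_recr /=.
have H1 := Spair Hk1; have H2 := IH Hk1; rewrite expnS.
have H3 : 2 ^ 2 <= 2 ^ k by rewrite leq_exp2l.
have H4 : 2 ^ 2 = 4 by []. rewrite H4 in H3.
move: H1 H2; rewrite !expnS.
set A := \sum_(j < k) Scnt j. lia.
Qed.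

Lemma lexlt_irr s : lexlt s s = false.
Proof. by elim: s => //= a s ->; rewrite ltnn andbF. Qed.

Lemma lexlt_trans s t r : lexlt s t -> lexlt t r -> lexlt s r.
Proof.
elim: s t r => [|a s IH] [|b t] [|c r] //=.
case/orP=> [Hab|/andP[/eqP <- Hst]]; case/orP=> [Hbc|/andP[/eqP <- Htr]].
- by rewrite (ltn_trans Hab Hbc).
- by rewrite Hab.
- by rewrite Hbc.
- by rewrite eqxx (IH _ _ Hst Htr) orbT.
Qed.

Lemma lexlt_total s t : s != t -> lexlt s t || lexlt t s.
Proof.
elim: s t => [|a s IH] [|b t] //=.
rewrite eqseq_cons => Hne.
case: (ltngtP a b) => //= Hab.
move: Hne; rewrite Hab eqxx /= => /IH.
by rewrite orbC.
Qed.

Definition rk L (t : L.-tuple bool) : nat :=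
  #|[pred t' : L.-tuple bool | lexlt (map nat_of_bool t') (map nat_of_bool t)]|.

Lemma rk_lt L (t : L.-tuple bool) : rk t < 2 ^ L.
Proof.
rewrite /rk.
set A := [pred t' : L.-tuple bool | _].
have <- : #|{: L.-tuple bool}| = 2 ^ L by rewrite card_tuple card_bool.
rewrite -(cardC A) -[X in X < _]addn0 ltn_add2l.
apply/card_gt0P; exists t; by rewrite !inE /= lexlt_irr.
Qed.

Lemma rk_mono L (t1 t2 : L.-tuple bool) :
  lexlt (map nat_of_bool t1) (map nat_of_bool t2) -> rk t1 < rk t2.
Proof.
move=> H; apply: proper_card; apply/properP; split.
  by apply/subsetP => t'; rewrite !inE /= => H'; exact: lexlt_trans H' H.
by exists t1; rewrite !inE /= ?lexlt_irr.
Qed.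

Lemma nob_inj : injective nat_of_bool.
Proof. by case; case. Qed.

Lemma rk_inj L : injective (@rk L).
Proof.
move=> t1 t2 E; apply/eqP; apply/negPn/negP => Hne.
have Hm : map nat_of_bool t1 != map nat_of_bool t2.
  apply: contra Hne => /eqP /(inj_map nob_inj) Heq; apply/eqP; exact: val_inj.
case/orP: (lexlt_total Hm) => /rk_mono; rewrite E ltnn //.
Qed.

Lemma rk_onto L r : r < 2 ^ L -> exists t : L.-tuple bool, rk t = r.
Proof.
move=> Hr.
pose f (t : L.-tuple bool) : 'I_(2 ^ L) := Ordinal (rk_lt t).
have finj : injective f by move=> t1 t2 /(congr1 val) /= /rk_inj.
have Hc : #|{: L.-tuple bool}| >= #|{: 'I_(2 ^ L)}| by rewrite card_tuple card_bool card_ord.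
have := inj_card_onto finj Hc (Ordinal Hr).
by case/codomP => t /(congr1 val) /= ->; exists t.
Qed.

Lemma sum_pow2 L : \sum_(l < L.+1) (0 < l) * 2 ^ l + 2 = 2 ^ L.+1.
Proof.
elim: L => [|L IH]; first by rewrite big_ord_recl big_ord0.
rewrite big_ord_recr /= -addnA [_ * _ + 2]addnC addnA IH mul1n [in RHS]expnS; lia.
Qed.

Lemma brank_rk L (t : L.-tuple bool) : 0 < L -> brank t = 2 ^ L - 1 + rk t.
Proof.
move=> HL; rewrite /brank size_tuple big_ord_recr /=.
have -> : #|[pred t' : L.-tuple bool | (0 < L) && bslt t' t]| = rk t.
  apply: eq_card => t'; rewrite !inE /= HL /bslt !size_tuple ltnn eqxx.
  by [].
rewrite (eq_bigr (fun l : 'I_L => (0 < l) * 2 ^ l)); last first.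
  move=> l _; rewrite cardS.
  transitivity (\sum_(t' : l.-tuple bool) (0 < l : nat)).
    apply: eq_bigr => t' _; rewrite /bslt !size_tuple ltn_ord andbT.
    by case: (0 < l).
  by rewrite sum_nat_const card_tuple card_bool mulnC.
case: L t HL => // L t _.
have E := sum_pow2 L; set S := (\sum_(l < L.+1) _) in E *; lia.
Qed.

Lemma brank_onto L r : 0 < L -> 2 ^ L <= r.+1 -> r.+2 <= 2 ^ L.+1 ->
  exists t : L.-tuple bool, brank t = r.
Proof.
move=> HL H1 H2.
have Hr : r - (2 ^ L - 1) < 2 ^ L by move: H2; rewrite expnS; lia.
have [t Ht] := rk_onto Hr.
by exists t; rewrite brank_rk // Ht; lia.
Qed.

Definition Bcnt l k := #|[pred v : l.-tuple letter | admissible v && (K v < k)]|.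

Lemma Bcnt_sum l k : Bcnt l k = \sum_(j < k) Ncnt j l.
Proof.
elim: k => [|k IH].
  by rewrite big_ord0 /Bcnt cardS big1 // => v _; rewrite ltn0 andbF.
rewrite big_ord_recr /= -IH /Bcnt /Ncnt !cardS -big_split /=.
apply: eq_bigr => v _; rewrite ltnS leq_eqVlt.
by case: (admissible v); case: ltngtP.
Qed.

Lemma Ck_eq k : \sum_(l < k) Bcnt l k = \sum_(j < k) Scnt j.
Proof.
under eq_bigr => l _ do rewrite Bcnt_sum.
rewrite exchange_big /=; apply: eq_bigr => j _; apply: Scnt_ext; exact: ltnW.
Qed.

Lemma alt_irr u : alt u u = false.
Proof. by rewrite /alt !ltnn !eqxx lexlt_irr. Qed.

Lemma Acnt_up n (u : n.-tuple letter) l k : admissible u -> K u = k ->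
  #|[pred v : l.-tuple letter | admissible v && alt v u]| + (l == n)
  <= Bcnt l k + (l <= n) * Ncnt k l.
Proof.
move=> Hu Ku.
rewrite /Bcnt /Ncnt !cardS big_distrr /= -big_split /=.
have Hpt : forall v : l.-tuple letter,
    ((admissible v && alt v u) : nat) <= (admissible v && (K v < k)) + (l <= n) * (admissible v && (K v == k)).
  move=> v; case: (admissible v) => //=.
  rewrite /alt Ku size_tuple (size_tuple u).
  have [H|H|H] := ltngtP (K v) k => //=.
  rewrite add0n muln1.
  have [H'|H'|H'] := ltngtP l n => //=.
  by case: lexlt.
case: eqP => [El|_]; last by rewrite addn0; apply: leq_sum => v _; exact: Hpt.
subst l.
rewrite (bigD1 u) //= [X in _ <= X](bigD1 u) //= alt_irr andbF add0n.
rewrite Hu Ku ltnn eqxx leqnn /= addnC leq_add2l.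
apply: leq_sum => v _; have := Hpt v; by rewrite leqnn.
Qed.

Lemma Acnt_lo n (u : n.-tuple letter) l k : K u = k ->
  Bcnt l k <= #|[pred v : l.-tuple letter | admissible v && alt v u]|.
Proof.
move=> Ku; rewrite /Bcnt !cardS; apply: leq_sum => v _.
by rewrite /alt Ku; case: (admissible v); case: (K v < k).
Qed.

Lemma sum_eqn n k : n < k -> \sum_(l < k) ((l : nat) == n : nat) = 1.
Proof.
move=> Hn.
rewrite (bigD1 (Ordinal Hn)) //= eqxx big1 // => l /eqP Hl.
case: eqP => // E; exfalso; apply: Hl; exact: val_inj.
Qed.

Lemma sum_leq_cut n k (F : nat -> nat) : n < k ->
  \sum_(l < k) (l <= n) * F l = \sum_(l < n.+1) F l.
Proof.
move=> Hn; rewrite (big_ord_widen k F Hn) [RHS]big_mkcond /=.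
by apply: eq_bigr => l _; rewrite ltnS; case: (l <= n); rewrite ?mul1n ?mul0n.
Qed.

Lemma arank_bounds n (u : n.-tuple letter) k : admissible u -> K u = k -> n < k ->
  1 + \sum_(j < k) Scnt j <= arank u <= \sum_(j < k) Scnt j + (Wlt n k + Ncnt k n).
Proof.
move=> Hu Ku Hn; rewrite /arank Ku -Ck_eq; apply/andP; split.
  by rewrite leq_add2l; apply: leq_sum => l _; exact: Acnt_lo.
have H : \sum_(l < k) (#|[pred v : l.-tuple letter | admissible v && alt v u]| + ((l:nat) == n))
    <= \sum_(l < k) (Bcnt l k + (l <= n) * Ncnt k l).
  by apply: leq_sum => l _; exact: Acnt_up.
rewrite big_split /= sum_eqn // big_split /= sum_leq_cut // in H.
suff E : \sum_(l < n.+1) Ncnt k l = Wlt n k + Ncnt k n by rewrite E addnC in H.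
rewrite /Wlt -(big_mkord xpredT) big_nat_recr //=.
case: n u Hu Ku Hn H => [|n] u Hu Ku Hn H; first by rewrite big_geq.
by rewrite big_ltn // Ncnt0.
Qed.

Definition a s j := 2 ^ j * 'C(s - j, j).

Lemma a_rec s j : a s j.+1 * (j.+1 * (s - j)) = 2 * (s - 2 * j) * (s - 2 * j - 1) * a s j.
Proof.
rewrite /a.
have [Hs|Hs] := ltnP s (2 * j + 2).
  rewrite bin_small; last by lia.
  have -> : s - 2 * j - 1 = 0 by lia.
  by rewrite !muln0 !mul0n.
have [r ->] : exists r, s = 2 * j + 2 + r by exists (s - (2 * j + 2)); lia.
have -> : 2 * j + 2 + r - j.+1 = j + 1 + r by lia.
have -> : 2 * j + 2 + r - j = (j + 2 + r) by lia.
have -> : 2 * j + 2 + r - 2 * j = r + 2 by lia.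
have -> : r + 2 - 1 = r + 1 by lia.
have E1 := mul_bin_left (j + 1 + r) j.
have E2 := mul_bin_down (j + 2 + r) j.
have H1 : (j + 1 + r - j) = r + 1 by lia.
have H2 : (j + 2 + r).-1 = j + 1 + r by lia.
have H3 : (j + 2 + r - j) = r + 2 by lia.
rewrite H1 in E1; rewrite H2 H3 in E2.
rewrite expnS.
set X := 'C(j + 1 + r, j.+1) in E1 *.
set Y := 'C(j + 1 + r, j) in E1 E2 *.
set Z := 'C(j + 2 + r, j) in E2 *.
set p := 2 ^ j.
have -> : 2 * p * X * (j.+1 * (j + 2 + r)) = 2 * p * (j + 2 + r) * (j.+1 * X) by ring.
rewrite E1.
have -> : 2 * p * (j + 2 + r) * ((r + 1) * Y) = 2 * p * (r + 1) * ((j + 2 + r) * Y) by ring.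
rewrite E2; ring.
Qed.

Lemma cancel_step A P Q B : A * P = Q * B -> Q <= P -> 0 < P -> A <= B.
Proof.
move=> E HQ HP.
have : A * P <= B * P by rewrite E mulnC leq_mul2l HQ orbT.
by rewrite leq_pmul2r.
Qed.

Lemma cancel_step2 A B C D p1 q1 p2 q2 :
  A * p1 = q1 * B -> B <= C -> C * p2 = q2 * D -> q1 * q2 <= p1 * p2 ->
  0 < p1 -> 0 < p2 -> A <= D.
Proof.
move=> E1 HBC E2 Hq Hp1 Hp2.
have H1 : A * (p1 * p2) <= q1 * C * p2 by rewrite mulnA E1 leq_mul2r leq_mul2l HBC !orbT.
have H2 : q1 * C * p2 = (q1 * q2) * D by rewrite -mulnA E2 mulnA.
have H3 : A * (p1 * p2) <= D * (p1 * p2).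
  by rewrite (leq_trans H1) // H2 mulnC leq_mul2l Hq orbT.
by move: H3; rewrite leq_pmul2r // muln_gt0 Hp1.
Qed.

Lemma poly_ineq e t d :
  (2 * (e + 1) * e) * (2 * (e + 4 * t + 5) * (e + 4 * t + 4))
  <= ((e + d + 3 * t + 4) * (2 * e + d + 3 * t + 4)) * ((e + d + t + 2) * (2 * e + d + 5 * t + 6)).
Proof.
have -> : ((e + d + 3 * t + 4) * (2 * e + d + 3 * t + 4)) * ((e + d + t + 2) * (2 * e + d + 5 * t + 6))
  = (2 * (e + 1) * e) * (2 * (e + 4 * t + 5) * (e + 4 * t + 4)) + (192 + 224*d + 92*d*d + 16*d*d*d + 1*d*d*d*d + 544*t + 488*t*d + 136*t*d*d + 12*t*d*d*d + 572*t*t + 352*t*t*d + 50*t*t*d*d + 264*t*t*t + 84*t*t*t*d + 45*t*t*t*t + 224*e + 260*e*d + 70*e*d*d + 6*e*d*d*d + 508*e*t + 380*e*t*d + 52*e*t*d*d + 398*e*t*t + 138*e*t*t*d + 108*e*t*t*t + 60*e*e + 98*e*e*d + 13*e*e*d*d + 78*e*e*t + 72*e*e*t*d + 27*e*e*t*t + 4*e*e*e + 12*e*e*e*d) by ring.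
exact: leq_addr.
Qed.

Lemma core n x t : 2 <= x -> x < n -> n.+1 <= 2 * x -> t <= x - 1 ->
  a (n - 1 + x) (x + t) <= a (n - 1 + x) (x - 1 - t).
Proof.
move=> Hx Hxn Hnx.
move Hs: (n - 1 + x) => s.
elim: t => [|t IH] Ht.
  have R := a_rec s (x - 1).
  have E0 : (x - 1).+1 = x by lia.
  rewrite E0 in R.
  rewrite addn0 subn0.
  apply: (cancel_step R); last by rewrite muln_gt0; apply/andP; split; lia.
  have [f [d [Ex En]]] : exists f d, x = d + 2 + f /\ n = 2 * (d + 2 + f) - 1 - d.
    exists (x - (2 * x - n - 1) - 2), (2 * x - n - 1); lia.
  rewrite -Hs En Ex.
  have -> : 2 * (d + 2 + f) - 1 - d - 1 + (d + 2 + f) - 2 * (d + 2 + f - 1) = f + 2 by lia.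
  have -> : f + 2 - 1 = f + 1 by lia.
  have -> : 2 * (d + 2 + f) - 1 - d - 1 + (d + 2 + f) - (d + 2 + f - 1) = d + 2 * f + 3 by lia.
  have -> : (d + 2 + f) * (d + 2 * f + 3) = 2 * (f + 2) * (f + 1) + (3 * f * d + f + d * d + 5 * d + 2) by ring.
  exact: leq_addr.
have R1 := a_rec s (x + t).
have R2 := a_rec s (x - 1 - t.+1).
have E1 : (x + t).+1 = x + t.+1 by lia.
rewrite E1 in R1.
have E : (x - 1 - t.+1).+1 = x - 1 - t by lia.
rewrite E in R2.
apply: (cancel_step2 R1 (IH (ltnW Ht)) R2).
- have [Hq|Hq] := ltnP s (2 * (x + t) + 2).
    have -> : s - 2 * (x + t) - 1 = 0 by lia.
    by rewrite muln0 !mul0n.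
  have [e [d [Ex En]]] : exists e d, x = e + d + 2 * t + 3 /\ n = 2 * e + d + 4 * t + 5.
    exists (s - 2 * (x + t) - 1), (2 * x - n - 1); lia.
  have -> : s - 2 * (x + t) = e + 1 by lia.
  have -> : e + 1 - 1 = e by lia.
  have -> : x + t.+1 = e + d + 3 * t + 4 by lia.
  have -> : s - (x + t) = 2 * e + d + 3 * t + 4 by lia.
  have -> : x - 1 - t = e + d + t + 2 by lia.
  have -> : s - (x - 1 - t.+1) = 2 * e + d + 5 * t + 6 by lia.
  have -> : s - 2 * (x - 1 - t.+1) = e + 4 * t + 5 by lia.
  have -> : e + 4 * t + 5 - 1 = e + 4 * t + 4 by lia.
  exact: poly_ineq.
- by rewrite muln_gt0; apply/andP; split; lia.
- by rewrite muln_gt0; apply/andP; split; lia.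
Qed.

Lemma Nform k l : 0 < l -> l < k -> Ncnt k l = 4 * a (k - 2) (k - l - 1).
Proof.
move=> Hl Hlk.
have := Ncnt_closed (l - 1) (k - l - 1).
have -> : l - 1 + (k - l - 1) + 2 = k by lia.
have -> : (l - 1).+1 = l by lia.
move=> ->; rewrite /a mulnA.
by have -> : k - 2 - (k - l - 1) = l - 1 by lia.
Qed.

Lemma WN_rev n k : 0 < n -> Wlt n k + Ncnt k n = \sum_(t < n) Ncnt k (n - t).
Proof.
move=> Hn; rewrite /Wlt -big_nat_recr //= big_rev_mkord.
rewrite subn1 /=; apply: eq_bigr => t _; by rewrite subSS.
Qed.

Lemma pointwise n x t : 2 <= n -> x < n -> n.+1 <= 2 * x -> t < n ->
  Ncnt (n + 1 + x) (n - t) <= Ncnt (n + 1 + x) (t + n.+1).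
Proof.
move=> Hn Hxn Hnx Ht.
rewrite Nform; [|lia|lia].
have -> : n + 1 + x - 2 = n - 1 + x by lia.
have -> : n + 1 + x - (n - t) - 1 = x + t by lia.
have [Htx|Htx] := ltnP t x.
  rewrite Nform; [|lia|lia].
  have -> : n + 1 + x - 2 = n - 1 + x by lia.
  have -> : n + 1 + x - (t + n.+1) - 1 = x - 1 - t by lia.
  rewrite leq_mul2l /=; apply: core; lia.
rewrite /a bin_small ?muln0 //; lia.
Qed.

Lemma main_ineq n x : 2 <= n -> x < n -> n.+1 <= 2 * x ->
  2 * (Wlt n (n + 1 + x) + Ncnt (n + 1 + x) n) <= Scnt (n + 1 + x).
Proof.
move=> Hn Hxn Hnx.
set k := n + 1 + x.
rewrite -(@Scnt_ext k (n.+1 + n)); last by rewrite /k; lia.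
rewrite big_split_ord /=.
have E1 : \sum_(i < n.+1) Ncnt k (lshift n i) = Wlt n k + Ncnt k n.
  rewrite /Wlt (eq_bigr (fun i : 'I_n.+1 => Ncnt k i)) // -(big_mkord xpredT (Ncnt k)).
  rewrite big_nat_recr //= big_ltn ?Ncnt0 //; lia.
have E2 : \sum_(i < n) Ncnt k (rshift n.+1 i) = \sum_(t < n) Ncnt k (t + n.+1).
  by apply: eq_bigr => i _ /=; rewrite addnC.
rewrite E1 E2 mul2n -addnn leq_add2l WN_rev; last by lia.
by apply: leq_sum => t _; apply: pointwise.
Qed.

Import Order.TTheory GRing.Theory Num.Theory.

Lemma prod_notpath a s : ~~ path adm a s ->
  (\prod_(p <- zip (a :: s) s) trans p.1 p.2 = 0 :> rat)%R.
Proof.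
elim: s a => [|b s IH] a //= H.
rewrite big_cons /=.
case Hab: (adm a b) H => /= H.
  by rewrite IH // GRing.mulr0.
by move: Hab; rewrite /adm => /negbFE/eqP ->; rewrite GRing.mul0r.
Qed.

Lemma notadm_Pr u : ~~ admissible u -> Pr u = 0%R.
Proof.
case: u => [|a s] //= H.
by rewrite prod_notpath // GRing.mulr0.
Qed.

Lemma Pr_ge0 u : (0 <= Pr u)%R.
Proof.
case Ha: (admissible u); last by rewrite notadm_Pr ?Ha.
by rewrite Pr_K // invr_ge0 exprn_ge0.
Qed.

Lemma Ind_ok n x (u : n.-tuple letter) : 2 <= n -> x < n -> n.+1 <= 2 * x ->
  admissible u -> Xcnt n u = x -> Ind u.
Proof.
move=> Hn Hxn Hnx Hu Hx.
have Ku : K u = n + 1 + x.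
  case: u Hu Hx => [[|a s] Hs] //= Hu Hx.
  rewrite K_count -Hx /Xcnt /=.
  move/eqP: Hs => /= Hs; rewrite -Hs /=.
  by rewrite addn1.
have Hi := main_ineq Hn Hxn Hnx.
move: Hi; rewrite -Ku => Hi.
have Hnk : n < K u by rewrite Ku; lia.
have H2k : 2 <= K u by rewrite Ku; lia.
have Hb := arank_bounds Hu (erefl (K u)) Hnk.
have Hc := Cid H2k.
have Hs := Sle H2k.
rewrite /Ind.
move: Hb Hc Hs Hi Hnk H2k; case: (K u) => [|L] //= Hb Hc Hs Hi Hnk H2k.
set C := \sum_(j < L.+1) Scnt j in Hb Hc.
have [t Ht] : exists t : L.-tuple bool, brank t = arank u.
  apply: brank_onto; first by lia.
  - move: Hb Hc Hs; rewrite !expnS; lia.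
  - move: Hb Hc Hi; rewrite !expnS; lia.
apply/existsP; exists t; rewrite Ht eqxx andbT; lia.
Qed.

Lemma path_LA m : path adm LA (nseq m LA).
Proof. by elim: m => //= m ->; rewrite andbT adm_tab. Qed.

Lemma path_LC x m : path adm LC (nseq x LC ++ nseq m LA).
Proof.
elim: x => [|x IH] /=; last exact: IH.
by case: m => //= m; rewrite path_LA ?andbT.
Qed.

Lemma g_one n x : 2 <= n -> x < n -> n.+1 <= 2 * x -> g n x = 1%R.
Proof.
move=> Hn Hxn Hnx.
rewrite /g.
have -> : (\sum_(u : n.-tuple letter | (Xcnt n u == x) && Ind u) Pr u =
           \sum_(u : n.-tuple letter | Xcnt n u == x) Pr u)%R.
  rewrite big_mkcondr /=; apply: eq_bigr => u /eqP Hx.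
  case Ha: (admissible u); first by rewrite (Ind_ok Hn Hxn Hnx Ha Hx).
  by rewrite notadm_Pr ?Ha //; case: ifP.
apply: divff.
pose s0 := nseq x LC ++ nseq (n - x) LA.
have Hs0 : size s0 == n by rewrite size_cat !size_nseq; apply/eqP; lia.
pose u0 : n.-tuple letter := Tuple Hs0.
have Ha0 : admissible u0.
  rewrite /= /s0; case: (x) Hxn Hnx => [|x'] //= _ _; exact: path_LC.
have Hx0 : Xcnt n u0 == x.
  rewrite /Xcnt /= /s0 take_cat size_nseq.
  have -> : (n.-1 < x) = false by lia.
  rewrite count_cat take_nseq; last by lia.
  have E : forall m y, count isCD (nseq m y) = isCD y * m.
    by move=> m y; elim: m => [|m IH] /=; [rewrite muln0 | rewrite IH mulnS].
  by rewrite !E /= mul1n mul0n addn0.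
rewrite (bigD1 u0) //=.
have H1 : (0 < Pr u0)%R by rewrite Pr_K // invr_gt0 exprn_gt0.
have H2 : (0 <= \sum_(i : n.-tuple letter | (Xcnt n i == x) && (i != u0)) Pr i)%R by apply: sumr_ge0 => i _; exact: Pr_ge0.
apply/eqP => H; move: H1 H2; rewrite /=; lra.
Qed.

Theorem mainTheorem9 (n x : nat) :
  (2 <= n)%N -> (x < n)%N -> (n.+1 <= 2 * x)%N ->
  g n x = 1%R /\ ((Ncnt (n + 1 + x) n)%:R <= V n (n + 1 + x))%R.
Proof.
move=> Hn Hxn Hnx; split; first exact: g_one.
have Hi := main_ineq Hn Hxn Hnx.
rewrite /V.
have : ((2 * (Wlt n (n + 1 + x) + Ncnt (n + 1 + x) n))%:R <= (Scnt (n + 1 + x))%:R :> rat)%R by rewrite ler_nat.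
rewrite natrM natrD.
move=> H; lra.
Qed.
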